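(* Let $\theta=(\alpha,-(\alpha+\gamma)/4,\gamma)$ with $(\alpha,\gamma)$ in the fourth quadrant of the real $\alpha\gamma$-plane, and let $\mathcal{R}_{\theta}(1)$ be the moduli space of $\theta$-semistable representations of the quiver $\mathbf{Q}$ (with relations $\phi_i\eta_j+\phi_j\eta_i=0$) of dimension vector $(1,4,1)$. If $\gamma<-\alpha$, then $\mathcal{R}_{\theta}(1)$ consists exactly of the (orbits of) globally surjective representations which are locally injective; if $\gamma>-\alpha$, then $\mathcal{R}_{\theta}(1)$ consists exactly of the (orbits of) globally injective representations which are locally surjective.
   Context: $\mathbf{Q}$ is the quiver with three vertices $-1,0,1$, four arrows $\eta_0,\dots,\eta_3$ from vertex $-1$ to vertex $0$ and four arrows $\phi_0,\dots,\phi_3$ from vertex $0$ to vertex $1$. A representation $R$ with maps $f_{\eta_i}$, $g_{\phi_i}$ satisfies the relations if $g_{\phi_i}f_{\eta_j}+g_{\phi_j}f_{\eta_i}=0$ for $0\le i\le j\le 3$. $R$ is globally (resp. locally) injective if $\sum\lambda_i f_{\eta_i}$ is injective for every $(\lambda_0,\dots,\lambda_3)\in\mathbb{C}^4\setminus\{0\}$ (resp. away from a subset of codimension at least 2); globally (resp. locally) surjective is defined analogously with $\sum\lambda_i g_{\phi_i}$ surjective. A representation $V$ is $\theta$-semistable (resp. $\theta$-stable) if $\theta\cdot\dim V=0$ and $\theta\cdot\dim V'\le0$ (resp. $<0$) for every nonzero proper subrepresentation $V'$. *)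

(* Defs.v *)
From Stdlib Require Rdefinitions.
From HB Require Import structures.
From mathcomp Require Import all_boot all_order all_algebra.
From mathcomp Require Import complex.
From mathcomp Require Import Rstruct.

Set Implicit Arguments.
Unset Strict Implicit.
Unset Printing Implicit Defensive.

Import Order.TTheory GRing.Theory Num.Theory.
Local Open Scope ring_scope.

Notation RR := Rdefinitions.R.
Notation CC := (complex RR).

(* A representation of the quiver Q of dimension vector (1,4,1):
   V_{-1} = C^1, V_0 = C^4, V_1 = C^1.  MathComp matrices act on ROW
   vectors by right multiplication, so f_{eta_i} : C^1 -> C^4 is a
   1x4 matrix and g_{phi_i} : C^4 -> C^1 is a 4x1 matrix; the composite
   g_{phi_i} o f_{eta_j} is the 1x1 matrix  f_{eta_j} *m g_{phi_i}. *)
Record rep141 := Rep141 {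
  f_eta : 'I_4 -> 'M[CC]_(1, 4);
  g_phi : 'I_4 -> 'M[CC]_(4, 1)
}.

Definition satisfies_relations (V : rep141) : Prop :=
  forall i j : 'I_4, (nat_of_ord i <= nat_of_ord j)%N ->
    f_eta V j *m g_phi V i + f_eta V i *m g_phi V j = 0.

Definition feta_comb (V : rep141) (l : 'I_4 -> CC) : 'M[CC]_(1, 4) :=
  \sum_(i < 4) l i *: f_eta V i.
Definition gphi_comb (V : rep141) (l : 'I_4 -> CC) : 'M[CC]_(4, 1) :=
  \sum_(i < 4) l i *: g_phi V i.

Definition mx_injective m n (A : 'M[CC]_(m, n)) : Prop :=
  forall v : 'rV[CC]_m, v *m A = 0 -> v = 0.
Definition mx_surjective m n (A : 'M[CC]_(m, n)) : Prop :=
  forall w : 'rV[CC]_n, exists v : 'rV[CC]_m, v *m A = w.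

Definition nonzero4 (l : 'I_4 -> CC) : Prop := exists i, l i != 0.

Definition rv_of (l : 'I_4 -> CC) : 'rV[CC]_4 := \row_i l i.

Definition globally_injective (V : rep141) : Prop :=
  forall l, nonzero4 l -> mx_injective (feta_comb V l).
Definition globally_surjective (V : rep141) : Prop :=
  forall l, nonzero4 l -> mx_surjective (gphi_comb V l).

(* "away from a subset of codimension at least 2": outside some linear
   subspace W of C^4 of dimension <= 2. *)
Definition locally_injective (V : rep141) : Prop :=
  exists W : 'M[CC]_4, (\rank W <= 2)%N /\
    forall l, nonzero4 l -> ~~ (rv_of l <= W)%MS -> mx_injective (feta_comb V l).
Definition locally_surjective (V : rep141) : Prop :=
  exists W : 'M[CC]_4, (\rank W <= 2)%N /\
    forall l, nonzero4 l -> ~~ (rv_of l <= W)%MS -> mx_surjective (gphi_comb V l).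

(* A subrepresentation: subspaces U_{-1} <= C^1, U_0 <= C^4, U_1 <= C^1
   (row spaces of square matrices) stable under all the arrows. *)
Definition is_subrep (V : rep141) (Um : 'M[CC]_1) (U0 : 'M[CC]_4) (Up : 'M[CC]_1)
  : Prop :=
  forall i : 'I_4, (Um *m f_eta V i <= U0)%MS /\ (U0 *m g_phi V i <= Up)%MS.

Definition theta_dot (t : RR * RR * RR) (dm d0 dp : nat) : RR :=
  t.1.1 * dm%:R + t.1.2 * d0%:R + t.2 * dp%:R.

Definition theta_semistable (t : RR * RR * RR) (V : rep141) : Prop :=
  theta_dot t 1 4 1 = 0 /\
  forall Um U0 Up, is_subrep V Um U0 Up ->
    let d := (\rank Um, \rank U0, \rank Up) in
    d != (0, 0, 0)%N -> d != (1, 4, 1)%N ->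
    theta_dot t (\rank Um) (\rank U0) (\rank Up) <= 0.

Definition theta_of (a c : RR) : RR * RR * RR := (a, - (a + c) / 4%:R, c).

(* Main.v *)
Require Import Defs.
From mathcomp Require Import all_boot all_order all_algebra.
From mathcomp Require Import complex Rstruct.
From mathcomp Require Import ring lra zify.
Import Order.TTheory GRing.Theory Num.Theory.
Local Open Scope ring_scope.

Definition Fm (V : rep141) : 'M[CC]_4 := \matrix_(i, r) f_eta V i 0 r.
Definition Gm (V : rep141) : 'M[CC]_4 := \matrix_(r, i) g_phi V i r 0.

Lemma rowFm V i : row i (Fm V) = f_eta V i.
Proof. by apply/rowP => r; rewrite !mxE. Qed.
Lemma colGm V i : col i (Gm V) = g_phi V i.
Proof. by apply/colP => r; rewrite !mxE. Qed.

Lemma feta_combE V l : feta_comb V l = rv_of l *m Fm V.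
Proof.
apply/rowP => r; rewrite /feta_comb summxE !mxE; apply: eq_bigr => i _.
by rewrite !mxE.
Qed.
Lemma gphi_combE V l : gphi_comb V l = Gm V *m (rv_of l)^T.
Proof.
apply/colP => r; rewrite /gphi_comb summxE !mxE; apply: eq_bigr => i _.
by rewrite !mxE mulrC.
Qed.

Lemma injE (A : 'M[CC]_(1,4)) : mx_injective A <-> A != 0.
Proof.
split.
- move=> h; apply/eqP => A0; have := h 1%:M; rewrite A0 mulmx0 => /(_ erefl).
  move/matrixP => /(_ 0 0); rewrite !mxE /=. by move/eqP; rewrite oner_eq0.
- move=> nz v hv; apply/rowP => i; rewrite (ord1 i) mxE.
  apply/eqP; apply: contraTT nz => hv0; rewrite negbK.
  have ev : v = (v 0 0)%:M by apply/rowP => j; rewrite (ord1 j) !mxE.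
  move: hv; rewrite ev mul_scalar_mx => /eqP; rewrite scaler_eq0 (negbTE hv0) /=.
  by [].
Qed.

Lemma surjE (A : 'M[CC]_(4,1)) : mx_surjective A <-> A != 0.
Proof.
split.
- move=> h; apply/eqP => A0; have [v] := h 1%:M; rewrite A0 mulmx0.
  move/matrixP => /(_ 0 0); rewrite !mxE /=. by move/eqP; rewrite eq_sym oner_eq0.
- move=> nz w.
  have [r hr] : exists r, A r 0 != 0.
    apply/existsP; apply: contraR nz; rewrite negb_exists => /forallP h.
    by apply/eqP/matrixP => i j; rewrite (ord1 j) mxE; apply/eqP; move: (h i); rewrite negbK.
  exists ((w 0 0 / A r 0) *: delta_mx 0 r).
  apply/rowP => j; rewrite (ord1 j) -scalemxAl mxE -rowE !mxE divfK //.
Qed.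

Lemma rv_ofK (v : 'rV[CC]_4) : rv_of (fun k => v 0 k) = v.
Proof. by apply/rowP => k; rewrite !mxE. Qed.

Lemma rv_of_nz l : nonzero4 l <-> rv_of l != 0.
Proof.
split.
- case=> i hi; apply/eqP => /rowP /(_ i); rewrite !mxE => e; by rewrite e eqxx in hi.
- move=> nz; apply/existsP; apply: contraR nz; rewrite negb_exists => /forallP h.
  by apply/eqP/rowP => k; rewrite !mxE; apply/eqP; move: (h k); rewrite negbK.
Qed.

Lemma unitP4 (A : 'M[CC]_4) :
  (forall v : 'rV[CC]_4, v != 0 -> v *m A != 0) <-> A \in unitmx.
Proof.
split.
- move=> h; rewrite -row_free_unit -kermx_eq0; apply/negPn/negP => nz.
  have [i hi] : exists i, row i (kermx A) != 0.
    apply/existsP; apply: contraR nz; rewrite negb_exists => /forallP hh.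
    by apply/eqP/row_matrixP => i; rewrite row0; apply/eqP; move: (hh i); rewrite negbK.
  move: (h _ hi); rewrite -row_mul mulmx_ker row0 eqxx. by [].
- move=> u v nz; apply: contra nz => /eqP e.
  by rewrite -(mulmxK u v) e mul0mx.
Qed.

Lemma GI_unit V : globally_injective V <-> Fm V \in unitmx.
Proof.
rewrite -unitP4; split.
- move=> h v nz; have := h (fun k => v 0 k); rewrite rv_of_nz rv_ofK => /(_ nz).
  by rewrite injE feta_combE rv_ofK.
- move=> h l /rv_of_nz nz; rewrite injE feta_combE; exact: h.
Qed.

Lemma GS_unit V : globally_surjective V <-> Gm V \in unitmx.
Proof.
rewrite -unitmx_tr -unitP4; split.
- move=> h v nz; have := h (fun k => v 0 k); rewrite rv_of_nz rv_ofK => /(_ nz).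
  rewrite surjE gphi_combE rv_ofK; apply: contra => /eqP e.
  by rewrite -(trmxK (Gm V *m v^T)) trmx_mul trmxK e trmx0.
- move=> h l /rv_of_nz nz; rewrite surjE gphi_combE.
  apply: contra (h _ nz) => /eqP e.
  by rewrite -(trmxK (rv_of l *m _)) trmx_mul trmxK e trmx0.
Qed.

Lemma free_of_inj m n (A : 'M[CC]_(m, n)) :
  (forall v : 'rV[CC]_m, v *m A = 0 -> v = 0) -> row_free A.
Proof.
move=> h; rewrite -kermx_eq0; apply/eqP/row_matrixP => r; rewrite row0.
by apply: h; rewrite -row_mul mulmx_ker row0.
Qed.

Lemma rank_antisym (M : 'M[CC]_4) : M^T = - M -> M != 0 -> (2 <= \rank M)%N.
Proof.
move=> hM nz.
have hM' : forall i j, M j i = - M i j.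
  by move=> i j; have := congr1 (fun A : 'M[CC]_(_,_) => A i j) hM; rewrite !mxE.
have [i [j hij]] : exists i j, M i j != 0.
  have : [exists i, [exists j, M i j != 0]].
    apply: contraR nz; rewrite negb_exists => /forallP h.
    apply/eqP/matrixP => i j; rewrite mxE; apply/eqP.
    by move: (h i); rewrite negb_exists => /forallP /(_ j); rewrite negbK.
  by case/existsP => i /existsP [j h]; exists i, j.
have hii : forall k, M k k = 0.
  move=> k; have := hM' k k; move/eqP; rewrite -subr_eq0 opprK -mulr2n.
  by rewrite -mulr_natr mulf_eq0 pnatr_eq0 orbF => /eqP.
pose f := fun k : 'I_2 => if k == 0 then i else j.
have hR : row_free (rowsub f M).
  apply: free_of_inj => v hv.
  have e1 := congr1 (fun A : 'M[CC]_(_,_) => A 0 j) hv; have e2 := congr1 (fun A : 'M[CC]_(_,_) => A 0 i) hv.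
  have sum2 : forall F : 'I_2 -> CC, \sum_k F k = F 0 + F 1.
    move=> F; rewrite !big_ord_recl big_ord0 addr0; congr (_ + F _); exact: val_inj.
  move: e1 e2; rewrite !mxE !sum2 !mxE /f /=.
  rewrite !hii (hM' i j) !mulr0 addr0 add0r => e1 e2.
  move: e1 => /eqP; rewrite mulf_eq0 (negbTE hij) orbF => /eqP e1.
  move: e2 => /eqP; rewrite mulrN oppr_eq0 mulf_eq0 (negbTE hij) orbF => /eqP e2.
  apply/rowP => k; rewrite mxE; case: k => [[|[|k]] hk] //.
  - by rewrite (_ : Ordinal hk = 0) // ; apply/val_inj.
  - by rewrite (_ : Ordinal hk = 1) //; apply/val_inj.
have : (\rank (rowsub f M) <= \rank M)%N by rewrite rowsubE mxrankM_maxr.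
by move: hR; rewrite /row_free => /eqP ->.
Qed.

Definition Mm V := Fm V *m Gm V.

Lemma Mm_entry V i j : Mm V i j = (f_eta V i *m g_phi V j) 0 0.
Proof. rewrite !mxE; apply: eq_bigr => k _; by rewrite !mxE. Qed.

Lemma Mm_antisym V : satisfies_relations V -> (Mm V)^T = - Mm V.
Proof.
move=> hV; apply/matrixP => i j; rewrite mxE [RHS]mxE !Mm_entry.
apply/eqP; rewrite -subr_eq0 opprK.
case: (leqP i j) => hij.
- have := congr1 (fun A : 'M[CC]_(_,_) => A 0 0) (hV i j hij).
  by rewrite !mxE => ->.
- have := congr1 (fun A : 'M[CC]_(_,_) => A 0 0) (hV j i (ltnW hij)).
  by rewrite !mxE addrC => ->.
Qed.

Lemma exists_out (W : 'M[CC]_4) : (\rank W <= 2)%N ->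
  exists l, nonzero4 l /\ ~~ (rv_of l <= W)%MS.
Proof.
move=> hW; have : ~~ (1%:M <= W)%MS.
  apply/negP => /mxrankS; rewrite mxrank1 => h.
  by have := leq_trans h hW.
case/row_subPn => k hk; exists (fun x => (1%:M : 'M[CC]_4) k x).
have e : rv_of (fun x => (1%:M : 'M[CC]_4) k x) = row k 1%:M.
  by apply/rowP => x; rewrite !mxE.
rewrite e; split => //; exists k; by rewrite mxE eqxx oner_eq0.
Qed.

Lemma LI_nz V : locally_injective V -> Fm V != 0.
Proof.
case=> W [hW h]; have [l [nl hl]] := exists_out _ hW.
move: (h l nl hl); rewrite injE feta_combE; apply: contra => /eqP ->.
by rewrite mulmx0.
Qed.

Lemma LS_nz V : locally_surjective V -> Gm V != 0.
Proof.
case=> W [hW h]; have [l [nl hl]] := exists_out _ hW.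
move: (h l nl hl); rewrite surjE gphi_combE; apply: contra => /eqP ->.
by rewrite mul0mx.
Qed.

Lemma LI_of V : satisfies_relations V -> Gm V \in unitmx -> Fm V != 0 ->
  locally_injective V.
Proof.
move=> hV hG hF.
have Mnz : Mm V != 0.
  apply: contra hF => /eqP e; apply/eqP.
  by rewrite -(mulmxK hG (Fm V)) -/(Mm V) e mul0mx.
exists (kermx (Mm V)); split.
  rewrite mxrank_ker; have := rank_antisym _ (Mm_antisym _ hV) Mnz.
  lia.
move=> l nl hl; rewrite injE feta_combE.
apply: contra hl => /eqP e; apply/sub_kermxP.
by rewrite /Mm mulmxA e mul0mx.
Qed.

Lemma LS_of V : satisfies_relations V -> Fm V \in unitmx -> Gm V != 0 ->
  locally_surjective V.
Proof.
move=> hV hF hG.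
have Mnz : Mm V != 0.
  apply: contra hG => /eqP e; apply/eqP.
  by rewrite -(mulKmx hF (Gm V)) -/(Mm V) e mulmx0.
exists (kermx (Mm V)); split.
  rewrite mxrank_ker; have := rank_antisym _ (Mm_antisym _ hV) Mnz.
  lia.
move=> l nl hl; rewrite surjE gphi_combE.
apply: contra hl => /eqP e; apply/sub_kermxP.
apply/eqP; rewrite -oppr_eq0 -mulmxN -(Mm_antisym _ hV).
rewrite -(trmxK (rv_of l *m _)) trmx_mul trmxK /Mm -mulmxA e mulmx0.
by rewrite trmx0.
Qed.

Lemma th (a c : RR) x y z : theta_dot (theta_of a c) x y z = a * x%:R - (a+c)/4%:R * y%:R + c * z%:R.
Proof. rewrite /theta_dot /theta_of /=. ring. Qed.

Lemma mulG_col V m (A : 'M[CC]_(m,4)) i : A *m g_phi V i = col i (A *m Gm V).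
Proof. apply/colP => r; rewrite !mxE; apply: eq_bigr => k _; by rewrite !mxE. Qed.

Lemma sub_g0 V Um U0 Up : is_subrep V Um U0 Up -> Up = 0 -> U0 *m Gm V = 0.
Proof.
move=> hs Up0; apply/matrixP => r i.
case: (hs i) => _; rewrite Up0 submx0 => /eqP e.
have := congr1 (fun B : 'M[CC]_(_,_) => B r 0) e; rewrite mulG_col !mxE => ->.
by [].
Qed.

Lemma sub_f V Um U0 Up : is_subrep V Um U0 Up -> Um \in unitmx -> (Fm V <= U0)%MS.
Proof.
move=> hs hu; apply/row_subP => i; rewrite rowFm -(mulKmx hu (f_eta V i)).
by apply: submx_trans (submxMl _ _) _; case: (hs i).
Qed.

Lemma r1 (U : 'M[CC]_1) : \rank U = 0%N \/ \rank U = 1%N.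
Proof. have := rank_leq_row U; lia. Qed.

Lemma r1_0 (U : 'M[CC]_1) : \rank U = 0%N -> U = 0.
Proof. by move=> h; apply/eqP; rewrite -mxrank_eq0 h. Qed.

Lemma r1_1 (U : 'M[CC]_1) : \rank U = 1%N -> U \in unitmx.
Proof. by move=> h; rewrite -row_free_unit /row_free h. Qed.

Lemma fzero V : Fm V = 0 -> forall i, f_eta V i = 0.
Proof. by move=> e i; rewrite -rowFm e row0. Qed.
Lemma gzero V : Gm V = 0 -> forall i, g_phi V i = 0.
Proof. by move=> e i; rewrite -colGm e col0. Qed.

Arguments sub_g0 {V Um U0 Up}.
Arguments sub_f {V Um U0 Up}.
Arguments r1_0 {U}.
Arguments r1_1 {U}.

Theorem mainTheorem2 (a c : RR) :
  0 < a -> c < 0 ->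
  (c < - a ->
    forall V : rep141, satisfies_relations V ->
      (theta_semistable (theta_of a c) V <->
         globally_surjective V /\ locally_injective V)) /\
  (- a < c ->
    forall V : rep141, satisfies_relations V ->
      (theta_semistable (theta_of a c) V <->
         globally_injective V /\ locally_surjective V)).
Proof.
move=> ha hc; split => hac V hV; split.
- case=> _ hss.
  have hG : Gm V \in unitmx.
    case: (boolP (Gm V \in unitmx)) => // hG; exfalso.
    have hs : is_subrep V 0 (kermx (Gm V)) 0.
      move=> i; split; first by rewrite mul0mx sub0mx.
      by rewrite mulG_col mulmx_ker col0 submx0.
    have hk : (0 < \rank (kermx (Gm V)))%N.
      rewrite mxrank_ker; move: hG; rewrite -row_free_unit /row_free.
      have := rank_leq_row (Gm V); lia.
    have hk4 := rank_leq_row (kermx (Gm V)).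
    move: (hss _ _ _ hs); rewrite /= !mxrank0.
    move: (\rank (kermx (Gm V))) hk hk4 => k.
    case: k => [|[|[|[|[|k]]]]] // _ _ /(_ isT isT); rewrite th; lra.
  have hF : Fm V != 0.
    apply/negP => /eqP F0.
    have hs : is_subrep V 1%:M 0 0.
      by move=> i; rewrite mul1mx fzero // mul0mx !sub0mx.
    move: (hss _ _ _ hs); rewrite /= !mxrank0 mxrank1 => /(_ isT isT).
    rewrite th; lra.
  split; first by apply/GS_unit.
  exact: LI_of.
- case=> /GS_unit hG /LI_nz hF; split; first by rewrite th; lra.
  move=> Um U0 Up hs /= hd0 hd1.
  have h0 := rank_leq_row U0.
  case: (r1 Up) => Upr.
    have U00 : U0 = 0 by rewrite -(mulmxK hG U0) (sub_g0 hs (r1_0 Upr)) mul0mx.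
    case: (r1 Um) => Umr.
      by move: hd0; rewrite Umr Upr U00 mxrank0.
    have := sub_f hs (r1_1 Umr); rewrite U00 submx0 => F0.
    by rewrite F0 in hF.
  rewrite Upr; case: (r1 Um) => Umr; rewrite Umr; rewrite Umr Upr in hd1;
  move: (\rank U0) h0 hd1 => k;
  case: k => [|[|[|[|[|k]]]]] // _ _; rewrite th; lra.
- case=> _ hss.
  have hF : Fm V \in unitmx.
    case: (boolP (Fm V \in unitmx)) => // hF; exfalso.
    have hs : is_subrep V 1%:M (Fm V) 1%:M.
      by move=> i; rewrite mul1mx -rowFm row_sub submx1.
    have hk : (\rank (Fm V) < 4)%N.
      move: hF; rewrite -row_free_unit /row_free.
      have := rank_leq_row (Fm V); lia.
    move: (hss _ _ _ hs); rewrite /= !mxrank1.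
    move: (\rank (Fm V)) hk => k.
    case: k => [|[|[|[|k]]]] // _ /(_ isT isT); rewrite th; lra.
  have hG : Gm V != 0.
    apply/negP => /eqP G0.
    have hs : is_subrep V 1%:M 1%:M 0.
      by move=> i; rewrite mul1mx gzero // mulmx0 !sub0mx submx1.
    move: (hss _ _ _ hs); rewrite /= !mxrank0 !mxrank1 => /(_ isT isT).
    rewrite th; lra.
  split; first by apply/GI_unit.
  exact: LS_of.
- case=> /GI_unit hF /LS_nz hG; split; first by rewrite th; lra.
  move=> Um U0 Up hs /= hd0 hd1.
  have h0 := rank_leq_row U0.
  case: (r1 Um) => Umr; last first.
    have U0r : \rank U0 = 4%N.
      have := mxrankS (sub_f hs (r1_1 Umr)); rewrite (mxrank_unit hF); lia.
    have hU : U0 \in unitmx by rewrite -row_free_unit /row_free U0r.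
    case: (r1 Up) => Upr; last by rewrite Umr U0r Upr in hd1.
    have := sub_g0 hs (r1_0 Upr) => e.
    by move: hG; rewrite -(mulKmx hU (Gm V)) e mulmx0 eqxx.
  rewrite Umr; case: (r1 Up) => Upr; rewrite Upr;
  move: (\rank U0) h0 => k;
  case: k => [|[|[|[|[|k]]]]] // _; rewrite th; lra.
Qed.
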